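(* Let $\succeq$ be a complete and transitive preference relation on $\mathcal{L}$ that is continuous with respect to convergence in probability, satisfies state-wise monotonicity, and is regret based. Then for any $X,Y\in\mathcal{L}$ with $F_X=F_Y$ (i.e., $X$ and $Y$ have the same cumulative distribution function), we have $X\sim Y$ (i.e., $X\succeq Y$ and $Y\succeq X$).
   Context: Fix a bounded interval of outcomes $[\underline x,\bar x]\subset\mathbb{R}$. Let $(S,\Sigma,\mathrm{P})$ be the probability space with $S=[0,1]$, $\Sigma$ the Borel $\sigma$-algebra on $[0,1]$, and $\mathrm{P}$ Lebesgue measure. $\mathcal{L}$ is the set of measurable random variables $X:S\to[\underline x,\bar x]$ taking only finitely many values; such $X$ is written $X=(x_1,S_1;\ldots;x_n,S_n)$, meaning $X=x_i$ on the event $S_i$, where $S_1,\ldots,S_n$ is a measurable partition of $S$. $F_X$ denotes the cdf of $X$. A preference relation $\succeq$ on $\mathcal{L}$ is a binary relation; $\succ$ and $\sim$ are its strict and indifference parts. A regret function is a continuous $\psi:[\underline x,\bar x]\times[\underline x,\bar x]\to\mathbb{R}$ with $\psi(x,x)=0$ for all $x$, $\psi(x,y)$ strictly increasing in $x$ and strictly decreasing in $y$. For $X=(x_1,S_1;\ldots;x_n,S_n)$ and $Y=(y_1,S_1;\ldots;y_n,S_n)$ written on a common partition, the regret lottery is the finite-support lottery $\Psi(X,Y)=(\psi(x_1,y_1),p_1;\ldots;\psi(x_n,y_n),p_n)$ with $p_i=\mathrm{P}(S_i)$ (i.e., the distribution of $s\mapsto\psi(X(s),Y(s))$). The relation $\succeq$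 is regret based if there exist a regret function $\psi$ and a continuous real-valued functional $V$ defined on the set of regret lotteries $\{\Psi(X,Y):X,Y\in\mathcal{L}\}$ such that for all $X,Y\in\mathcal{L}$: $X\succeq Y$ iff $V(\Psi(X,Y))\geqslant 0$. A sequence $X^k\in\mathcal{L}$ converges in probability to $X\in\mathcal{L}$ if for every $\varepsilon>0$, $\lim_{k\to\infty}\mathrm{P}(|X^k-X|\geqslant\varepsilon)=0$. $\succeq$ is continuous with respect to convergence in probability if, whenever $X^k\to X$ in probability: $X^k\succeq Y$ for all $k$ implies $X\succeq Y$, and $Y\succeq X^k$ for all $k$ implies $Y\succeq X$. $\succeq$ satisfies state-wise monotonicity if for any measurable partition $S_1,\ldots,S_n$ of $S$ and any $X=(x_1,S_1;\ldots;x_n,S_n)$, $Y=(y_1,S_1;\ldots;y_n,S_n)$ with $x_i\geqslant y_i$ for all $i$ and at least one strict inequality, $X\succ Y$. *)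

(* Defs.v *)
From HB Require Import structures.
From mathcomp Require Import all_boot all_order all_algebra.
From mathcomp Require Import all_classical all_reals all_analysis.
Set Implicit Arguments. Unset Strict Implicit. Unset Printing Implicit Defensive.
Import Order.TTheory GRing.Theory Num.Theory.
Import numFieldNormedType.Exports.
Local Open Scope classical_set_scope.
Local Open Scope ring_scope.

Section Defs.
Variable R : realType.

Definition Sset : set R := [set s | 0 <= s <= 1].

(* P = Lebesgue measure on S, real valued (it is finite). *)
Definition Prob (A : set R) : R := fine (lebesgue_measure (A `&` Sset)).

(* Random variables are functions R -> R; only their restriction to S matters. *)
Definition inL (xl xu : R) (X : R -> R) : Prop :=
  [/\ measurable_fun Sset X,
      (forall s, Sset s -> xl <= X s <= xu) &
      finite_set (X @` Sset)].

Definition cdfX (X : R -> R) (t : R) : R := Prob [set s | X s <= t].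

Definition cvg_in_prob (Xk : nat -> R -> R) (X : R -> R) : Prop :=
  forall eps : R, 0 < eps ->
    (fun k => Prob [set s | eps <= `|Xk k s - X s|]) @ \oo --> (0 : R).

Definition complete_rel xl xu (pref : (R -> R) -> (R -> R) -> Prop) :=
  forall X Y, inL xl xu X -> inL xl xu Y -> pref X Y \/ pref Y X.

Definition transitive_rel xl xu (pref : (R -> R) -> (R -> R) -> Prop) :=
  forall X Y Z, inL xl xu X -> inL xl xu Y -> inL xl xu Z ->
    pref X Y -> pref Y Z -> pref X Z.

Definition strict_pref (pref : (R -> R) -> (R -> R) -> Prop) X Y :=
  pref X Y /\ ~ pref Y X.

Definition indiff (pref : (R -> R) -> (R -> R) -> Prop) X Y :=
  pref X Y /\ pref Y X.

Definition continuous_in_prob xl xu (pref : (R -> R) -> (R -> R) -> Prop) :=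
  forall (Xk : nat -> R -> R) (X Y : R -> R),
    (forall k, inL xl xu (Xk k)) -> inL xl xu X -> inL xl xu Y ->
    cvg_in_prob Xk X ->
    ((forall k, pref (Xk k) Y) -> pref X Y) /\
    ((forall k, pref Y (Xk k)) -> pref Y X).

Definition meas_partition (n : nat) (Sc : 'I_n -> set R) : Prop :=
  [/\ (forall i, measurable (Sc i)),
      (forall i, Sc i `<=` Sset),
      (forall i j, i != j -> Sc i `&` Sc j = set0) &
      (forall s, Sset s -> exists i, Sc i s)].

Definition written_on (n : nat) (Sc : 'I_n -> set R) (x : 'I_n -> R)
  (X : R -> R) : Prop := forall i s, Sc i s -> X s = x i.

Definition statewise_monotone xl xu (pref : (R -> R) -> (R -> R) -> Prop) :=
  forall (n : nat) (Sc : 'I_n -> set R) (x y : 'I_n -> R) (X Y : R -> R),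
    inL xl xu X -> inL xl xu Y -> meas_partition Sc ->
    written_on Sc x X -> written_on Sc y Y ->
    (forall i, y i <= x i) ->
    (exists i, y i < x i /\ 0 < Prob (Sc i)) ->
    strict_pref pref X Y.

Definition regret_fun (xl xu : R) (psi : R -> R -> R) : Prop :=
  let I := [set x : R | xl <= x <= xu] in
  [/\ {within I `*` I, continuous (fun p : R * R => psi p.1 p.2)},
      (forall x, I x -> psi x x = 0),
      (forall x x' y, I x -> I x' -> I y -> x < x' -> psi x y < psi x' y) &
      (forall x y y', I x -> I y -> I y' -> y < y' -> psi x y' < psi x y)].

(* The regret lottery Psi(X,Y), represented by its cdfX
   t |-> P(psi(X,Y) <= t). *)
Definition regret_lottery (psi : R -> R -> R) (X Y : R -> R) : R -> R :=
  cdfX (fun s => psi (X s) (Y s)).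

Definition weak_cvg (Gk : nat -> R -> R) (G : R -> R) : Prop :=
  forall t, {for t, continuous G} -> (fun k => Gk k t) @ \oo --> G t.

Definition continuous_on_regret_lotteries xl xu (psi : R -> R -> R)
  (V : (R -> R) -> R) : Prop :=
  forall (Xk Yk : nat -> R -> R) (X Y : R -> R),
    (forall k, inL xl xu (Xk k)) -> (forall k, inL xl xu (Yk k)) ->
    inL xl xu X -> inL xl xu Y ->
    weak_cvg (fun k => regret_lottery psi (Xk k) (Yk k)) (regret_lottery psi X Y) ->
    (fun k => V (regret_lottery psi (Xk k) (Yk k))) @ \oo -->
      V (regret_lottery psi X Y).

Definition regret_based xl xu (pref : (R -> R) -> (R -> R) -> Prop) : Prop :=
  exists (psi : R -> R -> R) (V : (R -> R) -> R),
    [/\ regret_fun xl xu psi,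
        continuous_on_regret_lotteries xl xu psi V &
        forall X Y, inL xl xu X -> inL xl xu Y ->
          (pref X Y <-> 0 <= V (regret_lottery psi X Y))].

End Defs.

(* Main.v *)
Require Import Defs.
From HB Require Import structures.
From mathcomp Require Import all_boot all_order all_algebra.
From mathcomp Require Import all_classical all_reals all_analysis.
Import Order.TTheory GRing.Theory Num.Theory.
Import numFieldNormedType.Exports.
Local Open Scope ring_scope.

Lemma iter_period (n : nat) (f : 'I_n -> 'I_n) (x : 'I_n) u :
  iter (n + u + n`!) f x = iter (n + u) f x.
Proof.
pose g (k : 'I_n.+1) := iter k f x.
have : ~~ injectiveb g.
  apply/negP => /injectiveP inj; have := leq_card g inj.
  by rewrite !card_ord ltnn.
move=> /injectivePn [k1 [k2 ne e]].
wlog lt12 : k1 k2 ne e / (k1 < k2)%N.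
  move=> W; have [lt|gt|eq] := ltngtP k1 k2; first exact: (W k1 k2).
    by apply: (W k2 k1) => //; rewrite eq_sym.
  by move: ne; rewrite -(inj_eq val_inj) /= eq eqxx.
rewrite /g in e.
pose L := (k2 - k1)%N.
have L0 : (0 < L)%N by rewrite subn_gt0.
have Ln : (L <= n)%N.
  by rewrite /L; have := ltn_ord k2; rewrite ltnS => h; apply: leq_trans (leq_subr _ _) h.
have step v : iter (k1 + v + L) f x = iter (k1 + v) f x.
  rewrite -addnA (addnC v) addnA /L subnKC ?(ltnW lt12)//.
  by rewrite addnC iterD -e -iterD addnC.
have stepc c v : iter (k1 + v + c * L) f x = iter (k1 + v) f x.
  elim: c => [|c IH]; first by rewrite mul0n addn0.
  by rewrite mulSn addnA -addnA (addnC L) addnA -(addnA k1 v) step addnA IH.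
have [c ->] : exists c, n`! = (c * L)%N.
  by exists (n`! %/ L)%N; rewrite divnK// dvdn_fact// L0.
have k1n : (k1 <= n)%N by rewrite -ltnS.
have -> : (n + u = k1 + (n - k1 + u))%N by rewrite addnA subnKC.
exact: stepc.
Qed.

Lemma periodic_mod (T : Type) (w : nat -> T) M : (forall l, w (l + M)%N = w l) ->
  forall l, w (l %% M)%N = w l.
Proof.
move=> h l; rewrite {2}(divn_eq l M); elim: (l %/ M)%N => [|k IH].
  by rewrite mul0n add0n.
by rewrite mulSn -addnA addnC h IH.
Qed.

Lemma sum_shift (f : nat -> nat) M : f M = f 0%N ->
  (\sum_(0 <= l < M) f l.+1 = \sum_(0 <= l < M) f l)%N.
Proof.
move=> h; have := (@big_nat_recl nat 0%N addn M 0%N f (leq0n M)).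
rewrite big_nat_recr //= h addnC => /addnI -> //.
Qed.

Lemma sum_shiftk (f : nat -> nat) M : (forall l, f (l + M)%N = f l) ->
  forall k, (\sum_(0 <= l < M) f (l + k)%N = \sum_(0 <= l < M) f l)%N.
Proof.
move=> per; elim=> [|k IH]; first by under eq_bigr do rewrite addn0.
rewrite -IH; under eq_bigr do rewrite addnS -addSn.
apply: (sum_shift (fun l => f (l + k)%N)).
by rewrite add0n addnC per.
Qed.

Set Implicit Arguments. Unset Strict Implicit.
Section Decomp.
Variable R : realFieldType.
Variable n : nat.
Local Notation M := (n`!).

Definition Cnt (w : nat -> 'I_n) (i j : 'I_n) : nat :=
  \sum_(0 <= l < M) ((w l == i) && (w l.+1 == j)).

Lemma sum_pair (a b i : 'I_n) : (\sum_j ((a == i) && (b == j)) = (a == i))%N.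
Proof.
rewrite (bigD1 b) //= eqxx andbT big1 ?addn0 // => j /negbTE.
by rewrite eq_sym => ->; rewrite andbF.
Qed.

Lemma Cnt_bal (w : nat -> 'I_n) : (forall l, w (l + M)%N = w l) ->
  forall i, (\sum_j Cnt w i j = \sum_j Cnt w j i)%N.
Proof.
move=> per i; rewrite /Cnt.
rewrite [LHS]exchange_big [RHS]exchange_big /=.
under eq_bigr do rewrite sum_pair.
under [X in _ = X]eq_bigr => l _.
  under eq_bigr do rewrite andbC.
  rewrite sum_pair; over.
rewrite (sum_shift (fun l => (w l == i) : nat)) //=.
by rewrite -(add0n M) per.
Qed.

Lemma sum_eq1 (a : 'I_n) : (\sum_i (a == i) = 1)%N.
Proof. by rewrite (bigD1 a) //= eqxx big1 // => i /negbTE; rewrite eq_sym => ->. Qed.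

Lemma Cnt_total (w : nat -> 'I_n) : (\sum_i \sum_j Cnt w i j = M)%N.
Proof.
rewrite /Cnt.
under eq_bigr do rewrite exchange_big /=.
rewrite exchange_big /=.
under eq_bigr do under eq_bigr do rewrite sum_pair.
under eq_bigr do rewrite sum_eq1.
by rewrite sum_nat_const_nat muln1 subn0.
Qed.

Lemma decomp (q : 'I_n -> 'I_n -> R) :
  (forall i j, 0 <= q i j) -> (forall i, \sum_j q i j = \sum_j q j i) ->
  exists bs : seq (R * (nat -> 'I_n)),
    forall i j, q i j = \sum_(b <- bs) `|b.1| * (Cnt (fun l => b.2 (l %% M)%N) i j)%:R.
Proof.
pose supp (q : 'I_n -> 'I_n -> R) := [set p : 'I_n * 'I_n | q p.1 p.2 != 0].
suff: forall k q, (#|supp q| <= k)%N -> (forall i j, 0 <= q i j) ->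
    (forall i, \sum_j q i j = \sum_j q j i) ->
  exists bs : seq (R * (nat -> 'I_n)),
    forall i j, q i j = \sum_(b <- bs) `|b.1| * (Cnt (fun l => b.2 (l %% M)%N) i j)%:R.
  by move=> h; apply: h.
elim=> [|k IH] {}q.
  rewrite leqn0 => /eqP /cards0_eq s0 _ _; exists [::] => i j; rewrite big_nil.
  apply/eqP; apply: contraT => h; have : (i, j) \in supp q by rewrite inE.
  by rewrite s0 inE.
move=> sk q0 bal.
have [s0|[[i0 j0] p0]] := set_0Vmem (supp q).
  exists [::] => i j; rewrite big_nil.
  apply/eqP; apply: contraT => h; have : (i, j) \in supp q by rewrite inE.
  by rewrite s0 inE.
have qpos : 0 < q i0 j0 by rewrite lt_def q0 andbT; move: p0; rewrite inE.
pose act v := [exists j, 0 < q v j].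
pose succ v := if [pick j | 0 < q v j] is Some j then j else v.
have act_succ v : act v -> 0 < q v (succ v).
  rewrite /act /succ => /existsP [j hj]; case: pickP => [j' //|h].
  by rewrite h in hj.
have act_pres v : act v -> act (succ v).
  move=> av; have hs := act_succ v av; apply: contraT => /existsPn nh.
  have : \sum_j q (succ v) j = 0.
    by apply: big1 => j _; apply/eqP; rewrite eq_le q0 andbT leNgt nh.
  rewrite bal (bigD1 v) //= => /eqP; rewrite paddr_eq0 ?q0 ?sumr_ge0 //.
  by move=> /andP[/eqP h _]; rewrite h ltxx in hs.
have actk m : act (iter m succ i0).
  by elim: m => [|m IHm] /=; [apply/existsP; exists j0 | exact: act_pres].
pose w l := iter (n + l) succ i0.
have per l : w (l + M)%N = w l by rewrite /w addnA iter_period.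
have wS l : w l.+1 = succ (w l) by rewrite /w addnS.
have wpos l : 0 < q (w l) (w l.+1) by rewrite wS; apply: act_succ; apply: actk.
pose C i j := Cnt w i j.
have Cpos i j : (0 < C i j)%N -> 0 < q i j.
  move=> h; apply: contraTT h; rewrite -leNgt => hq; rewrite -leqNgt leqn0; apply/eqP.
  apply: big1 => l _; case: eqP => [wi|] //=; case: eqP => [wj|] //=.
  by move: hq; rewrite -wi -wj leNgt wpos.
have C0 : (0 < C (w 0%N) (w 1%N))%N.
  by rewrite /C /Cnt (big_ltn (fact_gt0 n)) !eqxx.
pose P := fun p : 'I_n * 'I_n => (0 < C p.1 p.2)%N.
pose F := fun p : 'I_n * 'I_n => q p.1 p.2 / (C p.1 p.2)%:R.
have [ps Pps minps] := @arg_minP _ R _ (w 0%N, w 1%N) P F C0.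
pose eps := F ps.
have eps0 : 0 < eps by apply: divr_gt0; [exact: Cpos|rewrite ltr0n].
pose q' i j := q i j - eps * (C i j)%:R.
have q'0 i j : 0 <= q' i j.
  rewrite /q' subr_ge0; case: (posnP (C i j)) => [->|cp]; first by rewrite mulr0 q0.
  by rewrite -ler_pdivlMr ?ltr0n //; exact: (minps (i, j) cp).
have bal' i : \sum_j q' i j = \sum_j q' j i.
  rewrite /q' !sumrB -!mulr_sumr -!natr_sum bal /C.
  by rewrite (Cnt_bal per).
have sub : supp q' \proper supp q.
  apply/properP; split.
    apply/fintype.subsetP => p; rewrite !inE; apply: contraNN => /eqP qp.
    have Cp : C p.1 p.2 = 0%N.
      by apply/eqP; rewrite -leqn0 leqNgt; apply/negP => /Cpos; rewrite qp ltxx.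
    by rewrite /q' qp Cp mulr0 subr0.
  exists ps; rewrite !inE; first by rewrite gt_eqF // Cpos.
  by rewrite /q' /eps /F divfK ?subrr ?eqxx // pnatr_eq0 -lt0n.
have sk' : (#|supp q'| <= k)%N by rewrite -ltnS; apply: leq_trans sk; exact: proper_card.
have [bs hbs] := IH q' sk' q'0 bal'.
exists ((eps, w) :: bs) => i j; rewrite big_cons -hbs /= gtr0_norm //.
have -> : Cnt (fun l => w (l %% M)%N) i j = C i j.
  by apply: eq_bigr => l _; rewrite !(periodic_mod _ _ _ per).
by rewrite /q' addrC subrK.
Qed.
End Decomp.

Local Open Scope classical_set_scope.
Local Open Scope ring_scope.
Set Implicit Arguments. Unset Strict Implicit.
Section P1.
Variable R : realType.
Local Notation S := (@Sset R).
Local Notation leb := (@lebesgue_measure R).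

Lemma SsetE : S = `[0, 1]%classic.
Proof. by apply/seteqP; split => x; rewrite /= in_itv. Qed.

Lemma mS : measurable S.
Proof. by rewrite SsetE. Qed.

Lemma lebS : leb S = 1%E.
Proof. by rewrite SsetE lebesgue_measure_itv /= lte_fin ltr01 oppr0 adde0. Qed.

Lemma lebAS (A : set R) : measurable (A `&` S) -> leb (A `&` S) = (Prob A)%:E.
Proof.
move=> mA; rewrite /Prob fineK// ge0_fin_numE//.
apply: (le_lt_trans (le_measure _ _ _ _)); [by rewrite inE|by rewrite inE; exact: mS|by apply: subIsetr|].
by change (leb S < +oo)%E; rewrite lebS ltry.
Qed.

Lemma Prob_ge0 (A : set R) : measurable (A `&` S) -> 0 <= Prob A.
Proof. by move=> mA; rewrite -lee_fin -lebAS// measure_ge0. Qed.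

Lemma ProbU (A B : set R) : measurable (A `&` S) -> measurable (B `&` S) ->
  A `&` B `&` S = set0 -> Prob (A `|` B) = Prob A + Prob B.
Proof.
move=> mA mB AB; rewrite {1}/Prob setIUl measureU//; last first.
  by rewrite setIACA setIid.
transitivity (fine ((Prob A)%:E + (Prob B)%:E)); last by []. by congr (fine (_ + _)%E); apply: lebAS.
Qed.

Lemma Prob0 (A : set R) : A `&` S = set0 -> Prob A = 0.
Proof. by move=> h; rewrite /Prob h measure0. Qed.

Lemma ProbS : Prob (R:=R) setT = 1.
Proof. by rewrite /Prob setTI; change (fine (leb S) = 1); rewrite lebS. Qed.

Definition J (Z W : R -> R) (c d : R) := Prob [set x | Z x = c /\ W x = d].

Lemma split_vals (Z : R -> R) (s : seq R) : uniq s ->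
  forall A : set R, (forall c, measurable (A `&` [set x | Z x = c] `&` S)) ->
  (forall x, S x -> A x -> Z x \in s) ->
  measurable (A `&` S) /\ Prob A = \sum_(c <- s) Prob (A `&` [set x | Z x = c]).
Proof.
elim: s => [|c s IH] /=.
  move=> _ A _ hA; have h0 : A `&` S = set0.
    by apply/seteqP; split => x //= [Ax Sx]; have := hA x Sx Ax; rewrite in_nil.
  by rewrite h0 Prob0 // big_nil.
move=> /andP[cs us] A mA hA.
pose A' := A `&` [set x | Z x <> c].
have [mA' PA'] : measurable (A' `&` S) /\
    Prob A' = \sum_(c' <- s) Prob (A' `&` [set x | Z x = c']).
  apply: IH => //.
    move=> c'; have [->|ne] := eqVneq c' c.
      suff -> : A' `&` [set x | Z x = c] `&` S = set0 by [].
      by apply/seteqP; split => x //= [[[_ h] h']].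
    suff -> : A' `&` [set x | Z x = c'] `&` S = A `&` [set x | Z x = c'] `&` S by [].
    apply/seteqP; split => x /=; first by move=> [[[Ax _] h] Sx].
    move=> [[Ax h] Sx]; split => //; split => //; split => //.
    by move=> h2; move: ne; rewrite -h -h2 eqxx.
  move=> x Sx [Ax ne]; have := hA x Sx Ax; rewrite in_cons => /orP[/eqP//|//].
have AE : A = (A `&` [set x | Z x = c]) `|` A'.
  apply/seteqP; split => x /=; last by case=> -[].
  by move=> Ax; have [h|h] := pselect (Z x = c); [left|right].
have mAc := mA c.
have dis : (A `&` [set x | Z x = c]) `&` A' `&` S = set0.
  by apply/seteqP; split => x //= [[[_ h] [_ h']] _].
split.
  rewrite AE setIUl; apply: measurableU => //.
rewrite {1}AE ProbU // big_cons; congr (_ + _); rewrite PA'.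
apply: eq_big_seq => c' c's; congr Prob.
apply/seteqP; split => x /=; first by case=> -[].
move=> [Ax h]; split => //; split => // h2; move: cs; rewrite -h2 h c's.
by [].
Qed.

Lemma mJ (Z W : R -> R) c d : measurable_fun S Z -> measurable_fun S W ->
  measurable ([set x | Z x = c /\ W x = d] `&` S).
Proof.
move=> mZ mW; have h1 := mZ mS _ (measurable_set1 c).
have h2 := mW mS _ (measurable_set1 d).
suff -> : [set x | Z x = c /\ W x = d] `&` S = (S `&` Z @^-1` [set c]) `&` (S `&` W @^-1` [set d]).
  exact: measurableI.
by apply/seteqP; split => x /=; [move=> [[h h'] Sx]|move=> [[Sx h] [_ h']]].
Qed.

Lemma split2 (Z W : R -> R) (s : seq R) : uniq s ->
  measurable_fun S Z -> measurable_fun S W ->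
  (forall x, S x -> Z x \in s) -> (forall x, S x -> W x \in s) ->
  forall P : R -> R -> bool,
  Prob [set x | P (Z x) (W x)] =
  \sum_(c <- s) \sum_(d <- s) (if P c d then J Z W c d else 0).
Proof.
move=> us mZ mW hZ hW P.
have inner c : measurable ([set x | P (Z x) (W x)] `&` [set x | Z x = c] `&` S) /\
   Prob ([set x | P (Z x) (W x)] `&` [set x | Z x = c]) =
   \sum_(d <- s) (if P c d then J Z W c d else 0).
  have pieces d : measurable ([set x | P (Z x) (W x)] `&` [set x | Z x = c] `&` [set x | W x = d] `&` S).
  case: (boolP (P c d)) => Pcd.
    suff -> : [set x | P (Z x) (W x)] `&` [set x | Z x = c] `&` [set x | W x = d] `&` S
       = [set x | Z x = c /\ W x = d] `&` S by apply: mJ.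
    apply/seteqP; split => x /=; first by move=> [[[_ h] h'] Sx].
    by move=> [[h h'] Sx]; rewrite h h' Pcd.
  suff -> : [set x | P (Z x) (W x)] `&` [set x | Z x = c] `&` [set x | W x = d] `&` S
       = set0 by [].
  apply/seteqP; split => x //= [[[Pxx h] h'] _].
  by move: Pxx; rewrite h h' (negbTE Pcd).
  have [m e] := @split_vals W s us ([set x | P (Z x) (W x)] `&` [set x | Z x = c])
    pieces (fun x Sx _ => hW x Sx).
    split => //; rewrite e; apply: eq_bigr => d _.
    case: ifP => Pcd.
      congr Prob; apply/seteqP; split => x /=; first by move=> [[_ h] h'].
      by move=> [h h']; rewrite h h' Pcd.
    apply: Prob0; apply/seteqP; split => x //= [[[Pxx h] h'] _].
    by move: Pxx; rewrite h h' Pcd.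
have [_ e] := @split_vals Z s us [set x | P (Z x) (W x)] (fun c => (inner c).1)
   (fun x Sx _ => hZ x Sx).
by rewrite e; apply: eq_bigr => c _; exact: (inner c).2.
Qed.

Lemma mpre (Z : R -> R) (B : set R) : measurable B -> measurable_fun S Z ->
  measurable ([set x | B (Z x)] `&` S).
Proof. by move=> mB mZ; rewrite setIC; exact: mZ mS _ mB. Qed.

Lemma ProbE (A B : set R) : A `&` S = B `&` S -> Prob A = Prob B.
Proof. by rewrite /Prob => ->. Qed.

Lemma max_below (s : seq R) (u : R) :
  let b := \big[Num.max/(u - 1)]_(c <- s | c < u) c in
  b < u /\ forall c, c \in s -> c < u -> c <= b.
Proof.
elim: s => [|c s [IH1 IH2]] /=; first by rewrite big_nil ltrBlDr ltrDl ltr01.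
rewrite big_cons; case: ifP => cu; split.
- by rewrite gt_max cu IH1.
- move=> c'; rewrite in_cons => /orP[/eqP ->|c's] c'u; rewrite le_max ?lexx//.
  by rewrite IH2 ?orbT.
- by [].
- move=> c'; rewrite in_cons => /orP[/eqP ->|c's] c'u; first by rewrite cu in c'u.
  exact: IH2.
Qed.

Lemma bal_point (X Y : R -> R) (s : seq R) :
  measurable_fun S X -> measurable_fun S Y ->
  (forall x, S x -> X x \in s) -> (forall x, S x -> Y x \in s) ->
  cdfX X = cdfX Y -> forall u, Prob [set x | X x = u] = Prob [set x | Y x = u].
Proof.
move=> mX mY hX hY e u.
have [bu hb] := max_below s u.
set b := \big[Num.max/(u - 1)]_(c <- s | c < u) c in bu hb.
suff key (Z : R -> R) : measurable_fun S Z -> (forall x, S x -> Z x \in s) ->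
    Prob [set x | Z x = u] = cdfX Z u - cdfX Z b.
  by rewrite (key X mX hX) (key Y mY hY) e.
move=> mZ hZ; rewrite /cdfX.
rewrite (@ProbE [set x | Z x <= u] ([set x | Z x = u] `|` [set x | Z x <= b])).
  rewrite ProbU ?addrK//.
  - by rewrite setIC; exact: mZ mS _ (measurable_set1 u).
  - by rewrite setIC; exact: mZ mS _ (measurable_itv `]-oo, b]).
  - apply/seteqP; split => x //= [[h h'] _]; move: h'; rewrite h leNgt bu.
    by [].
apply/seteqP; split => x /= [h Sx]; split => //.
  have [zu|zu] := eqVneq (Z x) u; first by left.
  by right; apply: hb; [exact: hZ|rewrite lt_neqAle zu h].
by case: h => [->//|h]; apply: (le_trans h); exact: ltW.
Qed.

Fixpoint locate (T : Type) (ps : seq (R * T)) (d : T) (x : R) : T :=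
  match ps with
  | [::] => d
  | p :: ps' => if x < p.1 then p.2 else locate ps' d (x - p.1)
  end.
Arguments locate {T}.

Definition tot {T : Type} (ps : seq (R * T)) := \sum_(p <- ps) p.1.

Lemma tot_ge0 {T : Type} (ps : seq (R * T)) : all (fun p => 0 <= p.1) ps -> 0 <= tot ps.
Proof.
rewrite /tot; elim: ps => [|p ps IH] /=; first by rewrite big_nil.
by move=> /andP[h1 h2]; rewrite big_cons addr_ge0 // IH.
Qed.

Lemma step_meas {T : Type} (ps : seq (R * T)) (d : T) (Q : T -> bool) :
  all (fun p => 0 <= p.1) ps -> forall c : R,
  measurable [set x | c <= x < c + tot ps /\ Q (locate ps d (x - c))] /\
  leb [set x | c <= x < c + tot ps /\ Q (locate ps d (x - c))] =
    (\sum_(p <- ps) (if Q p.2 then p.1 else 0))%:E.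
Proof.
elim: ps => [|p ps IH].
  move=> _ c; rewrite /tot !big_nil addr0.
  have -> : [set x | c <= x < c /\ Q (locate [::] d (x - c))] = set0.
    by apply/seteqP; split => x //= [/andP[h1 h2]]; move: (le_lt_trans h1 h2); rewrite ltxx.
  by rewrite measure0.
move=> /andP[p0 ps0] c.
have t0 : 0 <= tot ps := tot_ge0 ps0.
pose A1 := if Q p.2 then [set x | c <= x < c + p.1] else set0.
pose A2 := [set x | c + p.1 <= x < c + p.1 + tot ps /\ Q (locate ps d (x - (c + p.1)))].
have E : [set x | c <= x < c + tot (p :: ps) /\ Q (locate (p :: ps) d (x - c))] = A1 `|` A2.
  rewrite /tot big_cons -/(tot ps) addrA; apply/seteqP; split => x /=.
    move=> [/andP[cx xt]]; rewrite ltrBlDl; case: ifP => xp Qx.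
      by left; rewrite /A1 Qx /= cx xp.
    by right; split => //; [rewrite xt andbT leNgt xp | rewrite opprD addrA].
  rewrite /A1; case=> [|[/andP[h1 h2] Qx]].
    case: ifP => Qp //= /andP[cx xp]; split; last by rewrite ltrBlDl xp.
    by rewrite cx /= (lt_le_trans xp) // lerDl.
  have cx : c <= x by apply: le_trans h1; rewrite lerDl.
  rewrite cx h2 ltrBlDl ltNge h1 /=; split => //.
  by rewrite opprD addrA in Qx.
have [mA2 eA2] := IH ps0 (c + p.1).
have mA1 : measurable A1.
  rewrite /A1; case: ifP => _ //.
  have -> : [set x | c <= x < c + p.1] = [set` `[c, c + p.1[] by apply/seteqP; split => x; rewrite /= in_itv.
  exact: measurable_itv.
rewrite E; split; first exact: measurableU.
rewrite measureU //; last first.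
  apply/seteqP; split => x //=; rewrite /A1 /A2; case: ifP => _ //=; last by case.
  move=> [/andP[_ h] [/andP[h' _] _]].
  by move: (lt_le_trans h h'); rewrite ltxx.
rewrite [X in (_ + X)%E](_ : _ = (\sum_(p <- ps) (if Q p.2 then p.1 else 0))%:E); last exact: eA2.
rewrite big_cons EFinD; congr (_ + _)%E.
rewrite /A1; case: ifP => _; last by rewrite measure0.
have -> : [set x | c <= x < c + p.1] = [set` `[c, c + p.1[] by apply/seteqP; split => x; rewrite /= in_itv.
apply: (@eq_trans _ _ (lebesgue_measure ([set` `[c, c + p.1[] : set R))); first by [].
rewrite lebesgue_measure_itv /= lte_fin ltrDl.
case: ltP => h; first by rewrite -EFinD addrAC subrr add0r.
by rewrite (_ : p.1 = 0) //; apply/le_anti; rewrite p0 andbT; move: h; rewrite leNgt.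
Qed.

Lemma step_S {T : Type} (ps : seq (R * T)) (d : T) (Q : T -> bool) :
  all (fun p => 0 <= p.1) ps -> tot ps = 1 ->
  measurable ([set x | Q (locate ps d x)] `&` S) /\
  Prob [set x | Q (locate ps d x)] = \sum_(p <- ps) (if Q p.2 then p.1 else 0).
Proof.
move=> ps0 t1; have [m e] := step_meas d Q ps0 0.
rewrite add0r t1 in m e.
pose B0 := [set x : R | 0 <= x < 1 /\ Q (locate ps d (x - 0))].
pose B1 := [set x : R | x = 1 /\ Q (locate ps d 1)].
have E : [set x | Q (locate ps d x)] `&` S = B0 `|` B1.
  apply/seteqP; split => x /=.
    move=> [Qx /andP[x0 x1]]; have [xl1|xg1] := ltP x 1.
      by left; split; [rewrite x0 xl1|rewrite subr0].
    right; have xe : x = 1 by apply/le_anti; rewrite x1.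
    by split => //; rewrite -xe.
  rewrite /B0 /B1 /=; case=> [[/andP[x0 x1] Qx]|[-> Q1]].
    by rewrite subr0 in Qx; split => //; rewrite /Sset /= x0 ltW.
  by split => //; rewrite /Sset /= ler01 lexx.
have [mB1 lB1] : measurable B1 /\ leb B1 = 0%E.
  case: (boolP (Q (locate ps d 1))) => Q1.
    have -> : B1 = [set 1].
      by apply/seteqP; split => x /=; [case|move=> ->].
    split; first exact: measurable_set1.
    exact: lebesgue_measure_set1.
  have -> : B1 = set0.
    by apply/seteqP; split => x //= [_ h]; rewrite h in Q1.
  by split => //; rewrite measure0.
rewrite E; split; first exact: measurableU.
rewrite /Prob E measureU0 //.
by rewrite [X in fine X](_ : _ = (\sum_(p <- ps) (if Q p.2 then p.1 else 0))%:E); [|exact: e].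
Qed.

End P1.

Set Implicit Arguments. Unset Strict Implicit.
Section Main.
Variable R : realType.
Local Notation S := (@Sset R).

Lemma regret_split (psi : R -> R -> R) (Z W : R -> R) (s : seq R) : uniq s ->
  measurable_fun S Z -> measurable_fun S W ->
  (forall x, S x -> Z x \in s) -> (forall x, S x -> W x \in s) ->
  regret_lottery psi Z W =
  (fun t => \sum_(c <- s) \sum_(d <- s) (if psi c d <= t then J Z W c d else 0)).
Proof.
move=> us mZ mW hZ hW; apply/funext => t; rewrite /regret_lottery /cdfX.
exact: (split2 us mZ mW hZ hW (fun c d => psi c d <= t)).
Qed.

Lemma J_swap (Z W : R -> R) c d : J W Z c d = J Z W d c.
Proof. by rewrite /J; congr Prob; apply/seteqP; split => x /= [h1 h2]. Qed.

Lemma lottery_eq (psi : R -> R -> R) (Z W Z' W' : R -> R) (s : seq R) : uniq s ->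
  measurable_fun S Z -> measurable_fun S W ->
  (forall x, S x -> Z x \in s) -> (forall x, S x -> W x \in s) ->
  measurable_fun S Z' -> measurable_fun S W' ->
  (forall x, S x -> Z' x \in s) -> (forall x, S x -> W' x \in s) ->
  (forall c d, c \in s -> d \in s -> J Z W c d = J Z' W' c d) ->
  regret_lottery psi Z W = regret_lottery psi Z' W' /\
  regret_lottery psi W Z = regret_lottery psi W' Z'.
Proof.
move=> us mZ mW hZ hW mZ' mW' hZ' hW' hJ.
rewrite !(regret_split psi us) //; split; apply/funext => t.
  by apply: eq_big_seq => c cs; apply: eq_big_seq => d ds; rewrite hJ.
by apply: eq_big_seq => c cs; apply: eq_big_seq => d ds; rewrite !(J_swap _ _ c d) hJ.
Qed.

Lemma chain_contra (xl xu : R) (pref : (R -> R) -> (R -> R) -> Prop)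
  (psi : R -> R -> R) (V : (R -> R) -> R) :
  complete_rel xl xu pref -> transitive_rel xl xu pref ->
  (forall X Y, inL xl xu X -> inL xl xu Y ->
     (pref X Y <-> 0 <= V (regret_lottery psi X Y))) ->
  forall (X Y : R -> R) (Z : nat -> R -> R) (M : nat),
  inL xl xu X -> inL xl xu Y -> (forall k, inL xl xu (Z k)) ->
  (0 < M)%N -> Z M = Z 0%N ->
  (forall k, regret_lottery psi (Z k) (Z k.+1) = regret_lottery psi X Y /\
             regret_lottery psi (Z k.+1) (Z k) = regret_lottery psi Y X) ->
  pref X Y -> ~ pref Y X -> False.
Proof.
move=> cpl tr Hreg X Y Z M LX LY LZ M0 ZM hZ pXY npYX.
have P k : pref (Z k) (Z k.+1).
  by apply/(Hreg _ _ (LZ _) (LZ _)); rewrite (hZ k).1; apply/Hreg.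
have NP : ~ pref (Z 1%N) (Z 0%N).
  by move/(Hreg _ _ (LZ _) (LZ _)); rewrite (hZ 0%N).2 => /(Hreg _ _ LY LX).
have ch m : pref (Z 1%N) (Z m.+1).
  elim: m => [|m IH]; first by case: (cpl _ _ (LZ 1%N) (LZ 1%N)).
  exact: (tr _ _ _ (LZ _) (LZ _) (LZ _) IH (P _)).
by apply: NP; rewrite -ZM -(prednK M0); exact: ch.
Qed.

Lemma fin_vals (xl xu : R) (X Y : R -> R) : inL xl xu X -> inL xl xu Y ->
  exists s : seq R, [/\ uniq s, (forall x, S x -> X x \in s),
    (forall x, S x -> Y x \in s) & (forall c, c \in s -> xl <= c <= xu)].
Proof.
case=> mX bX /finite_fsetP [BX eX]; case=> mY bY /finite_fsetP [BY eY].
exists (undup (finmap.enum_fset BX ++ finmap.enum_fset BY)); split.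
- exact: undup_uniq.
- move=> x Sx; rewrite mem_undup mem_cat.
  have : (X @` S) (X x) by exists x.
  by rewrite eX /= => ->.
- move=> x Sx; rewrite mem_undup mem_cat.
  have : (Y @` S) (Y x) by exists x.
  by rewrite eY /= => ->; rewrite orbT.
- move=> c; rewrite mem_undup mem_cat => /orP[cB|cB].
    have : (X @` S) c by rewrite eX.
    by move=> -[x Sx <-]; exact: bX.
  have : (Y @` S) c by rewrite eY.
  by move=> -[x Sx <-]; exact: bY.
Qed.

Lemma Prob_marg (Z W : R -> R) (s : seq R) (c : R) : uniq s ->
  measurable_fun S Z -> measurable_fun S W -> (forall x, S x -> W x \in s) ->
  Prob [set x | Z x = c] = \sum_(d <- s) J Z W c d.
Proof.
move=> us mZ mW hW.
have pieces d : measurable ([set x | Z x = c] `&` [set x | W x = d] `&` S).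
  rewrite (_ : [set x | Z x = c] `&` [set x | W x = d] = [set x | Z x = c /\ W x = d]); first exact: mJ.
  by apply/seteqP; split => x /=; case.
have [_ ->] := split_vals us pieces (fun x Sx _ => hW x Sx).
by apply: eq_bigr => d _; congr Prob; apply/seteqP; split => x /=; case.
Qed.

Lemma Prob_tot (Z : R -> R) (s : seq R) : uniq s ->
  measurable_fun S Z -> (forall x, S x -> Z x \in s) ->
  \sum_(c <- s) Prob [set x | Z x = c] = 1.
Proof.
move=> us mZ hZ.
have pieces c : measurable (setT `&` [set x | Z x = c] `&` S).
  have h := mZ (@mS R) _ (measurable_set1 c); rewrite setTI setIC; exact: h.
have [_ e] := split_vals us pieces (fun x Sx _ => hZ x Sx).
by rewrite -ProbS e; apply: eq_bigr => c _; rewrite setTI.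
Qed.

Lemma construct (xl xu : R) (X Y : R -> R) (s : seq R) :
  inL xl xu X -> inL xl xu Y -> cdfX X = cdfX Y ->
  uniq s -> (forall x, S x -> X x \in s) -> (forall x, S x -> Y x \in s) ->
  (forall c, c \in s -> xl <= c <= xu) ->
  exists (Z : nat -> R -> R) (M : nat),
  [/\ (forall k, inL xl xu (Z k)), (forall k x, Z k x \in s), (0 < M)%N, Z M = Z 0%N &
     forall k c d, c \in s -> d \in s -> J (Z k) (Z k.+1) c d = J X Y c d].
Proof.
move=> LX LY eF us hX hY hb.
have [mX _ _] := LX; have [mY _ _] := LY.
pose n := size s.
have n0 : (0 < n)%N.
  have := hX 0 (ltac:(by rewrite /Sset /= lexx ler01)).
  by rewrite /n; case: (s).
pose a (i : 'I_n) := nth xl s i.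
have aS i : a i \in s by rewrite /a mem_nth.
have ainj i j : a i = a j -> i = j.
  by move=> /eqP; rewrite /a nth_uniq // => /eqP /val_inj.
have sa c : c \in s -> exists i, c = a i.
  move=> cs; have ic : (index c s < n)%N by rewrite index_mem.
  by exists (Ordinal ic); rewrite /a nth_index.
have bigs (F : R -> R) : \sum_(c <- s) F c = \sum_(i < n) F (a i).
  by rewrite (big_nth xl) big_mkord.
pose q (i j : 'I_n) := J X Y (a i) (a j).
have q0 i j : 0 <= q i j by apply: Prob_ge0; apply: mJ.
have bal i : \sum_j q i j = \sum_j q j i.
  rewrite /q.
  transitivity (Prob [set x | X x = a i]); first by rewrite (Prob_marg _ us mX mY hY) bigs.
  rewrite (bal_point mX mY hX hY eF) (Prob_marg _ us mY mX hX) bigs.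
  by apply: eq_bigr => j _; rewrite J_swap.
have qtot : \sum_i \sum_j q i j = 1.
  rewrite -(Prob_tot us mX hX) bigs; apply: eq_bigr => i _.
  by rewrite (Prob_marg _ us mX mY hY) bigs.
have [bs hbs] := decomp q0 bal.
pose M := n`!.
have iotaE : iota 0 M = index_iota 0 M by rewrite /index_iota subn0.
pose lab (b : R * (nat -> 'I_n)) (l : nat) : nat -> 'I_n := fun k => b.2 ((l + k) %% M)%N.
pose ps := flatten [seq [seq (`|b.1|, lab b l) | l <- iota 0 M] | b <- bs].
pose d0 : nat -> 'I_n := fun _ => Ordinal n0.
pose Z k x := a (locate ps d0 x (k %% M)%N).
have sumps (Q : (nat -> 'I_n) -> bool) : \sum_(p <- ps) (if Q p.2 then p.1 else 0) =
    \sum_(b <- bs) \sum_(l <- iota 0 M) (if Q (lab b l) then `|b.1| else 0).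
  by rewrite big_flatten /= big_map; apply: eq_bigr => b _; rewrite big_map.
have ps0 : all (fun p => 0 <= p.1) ps.
  rewrite /ps; elim: (bs) => [|b bs' IH] //=; rewrite all_cat IH andbT all_map.
  by apply/allP => l _ /=; exact: normr_ge0.
have tot1 : tot ps = 1.
  have -> : tot ps = \sum_(p <- ps) (if true then p.1 else 0) by [].
  rewrite (sumps (fun _ => true)) -qtot.
  under [RHS]eq_bigr do under eq_bigr do rewrite hbs.
  under [RHS]eq_bigr do rewrite exchange_big /=.
  rewrite [RHS]exchange_big /=; apply: eq_bigr => b _.
  rewrite iotaE sumr_const_nat subn0 -mulr_natr.
  under [RHS]eq_bigr do rewrite -mulr_sumr.
  by rewrite -mulr_sumr; under eq_bigr do rewrite -natr_sum; rewrite -natr_sum Cnt_total.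
have law k i j : J (Z k) (Z k.+1) (a i) (a j) = q i j.
  pose Q (lb : nat -> 'I_n) := (lb (k %% M)%N == i) && (lb (k.+1 %% M)%N == j).
  have -> : J (Z k) (Z k.+1) (a i) (a j) = Prob [set x | Q (locate ps d0 x)].
    rewrite /J; congr Prob; apply/seteqP; split => x /=.
      by move=> [/ainj h1 /ainj h2]; rewrite /Q h1 h2 !eqxx.
    by move=> /andP[/eqP h1 /eqP h2]; rewrite /Z h1 h2.
  have [_ ->] := step_S d0 Q ps0 tot1.
  rewrite sumps hbs; apply: eq_bigr => b _.
  transitivity (`|b.1| * (\sum_(0 <= l < M)
      ((b.2 ((l + k) %% M)%N == i) && (b.2 ((l + k).+1 %% M)%N == j) : nat))%:R).
    rewrite iotaE natr_sum mulr_sumr; apply: eq_bigr => l _.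
    rewrite /Q /lab !modnDmr addnS; case: ifP => _; by rewrite ?mulr1 ?mulr0.
  congr (_ * _%:R); rewrite /Cnt.
  apply: (sum_shiftk (fun l => (b.2 (l %% M)%N == i) && (b.2 (l.+1 %% M)%N == j) : nat)).
  by move=> l /=; rewrite -addSn !modnDr.
exists Z, M; split.
- move=> k; split.
  + move=> _ B mB.
    pose Q (lb : nat -> 'I_n) := `[< B (a (lb (k %% M)%N)) >].
    have [m _] := step_S d0 Q ps0 tot1.
    rewrite setIC (_ : Z k @^-1` B = [set x | Q (locate ps d0 x)]) //.
    by apply/seteqP; split => x /=; rewrite /Q asboolE.
  + by move=> x _; apply: hb; exact: aS.
  + apply: (@sub_finite_set _ _ [set` s]); last exact: finite_seq.
    by move=> y [x _ <-]; exact: aS.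
- by move=> k x; exact: aS.
- exact: fact_gt0.
- by apply/funext => x; rewrite /Z modnn mod0n.
- move=> k c d cs ds; have [i ->] := sa c cs; have [j ->] := sa d ds.
  exact: law.
Qed.

End Main.

Unset Implicit Arguments.

Theorem proposition1 (R : realType) (xl xu : R)
  (pref : (R -> R) -> (R -> R) -> Prop) :
  complete_rel xl xu pref ->
  transitive_rel xl xu pref ->
  continuous_in_prob xl xu pref ->
  statewise_monotone xl xu pref ->
  regret_based xl xu pref ->
  forall X Y : R -> R, inL xl xu X -> inL xl xu Y ->
    cdfX X = cdfX Y -> indiff pref X Y.
Proof.
move=> cpl tr _ _ [psi [V [_ _ Hreg]]] X Y LX LY eF.
have key X' Y' : inL xl xu X' -> inL xl xu Y' -> cdfX X' = cdfX Y' ->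
    pref X' Y' -> pref Y' X'.
  move=> LX' LY' eF' pXY; case: (pselect (pref Y' X')) => // npYX; exfalso.
  have [s [us hX hY hb]] := fin_vals LX' LY'.
  have [Z [M [LZ hZ M0 ZM hJ]]] := construct LX' LY' eF' us hX hY hb.
  apply: (chain_contra cpl tr Hreg LX' LY' LZ M0 ZM _ pXY npYX) => k.
  have [mX _ _] := LX'; have [mY _ _] := LY'.
  have [mZ _ _] := LZ k; have [mZ' _ _] := LZ k.+1.
  apply: (lottery_eq psi us mZ mZ' _ _ mX mY hX hY (hJ k)).
    by move=> x _; exact: hZ.
  by move=> x _; exact: hZ.
case: (cpl X Y LX LY) => h; split => //; first exact: key.
by apply: key => //; rewrite eF.
Qed.
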